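(* There is an absolute constant $C>0$ such that the following holds. Let $n,d$ be positive integers and let $E$ be a nonempty family of subsets of $[n]=\{1,\dots,n\}$, each of size at most $d$. For every positive integer $p\le d-1$ there exists a non-adaptive group testing algorithm for $E$ consisting of $t\le C\,\frac{d}{p}\log|E|$ tests, i.e. pools $T_1,\dots,T_t\subseteq[n]$, which allows to discard all hyperedges $e\in E$ with $|e\setminus e^*|\ge p$, where $e^*$ is the defective hyperedge: for every $e^*\in E$ and every $e\in E$ with $|e\setminus e^*|\ge p$ one has $r(e)\neq r(e^* )$.
   Context: Group testing on a hypergraph: the set of items is $[n]$, and $E$ is a family of subsets of $[n]$ (hyperedges), exactly one of which, $e^*\in E$, is the unknown defective hyperedge. A test on a pool $T\subseteq[n]$ gives a positive response iff $T\cap e^*\neq\emptyset$. A non-adaptive algorithm with $t$ tests is a sequence of pools $T_1,\dots,T_t\subseteq[n]$ fixed in advance (all tested in parallel); for $f\in E$ its response vector is $r(f)=(r_1,\dots,r_t)\in\{0,1\}^t$ with $r_i=1$ iff $T_i\cap f\neq\emptyset$. A hyperedge $e$ can be discarded when $e^*$ is defective if the observed responses are inconsistent with $e$ being defective, i.e. $r(e)\neq r(e^* )$. Logarithms are to a fixed base (e.g. base 2). *)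

(* Defs.v *)
From mathcomp Require Import all_boot.
From Stdlib Require Import Reals.
Set Implicit Arguments. Unset Strict Implicit. Unset Printing Implicit Defensive.

(* Items are [n] = {0,...,n-1} (type 'I_n); hyperedges are {set 'I_n}. *)

Definition test_response (n : nat) (T : {set 'I_n}) (f : {set 'I_n}) : bool :=
  T :&: f != set0.

Definition response_vec (n t : nat) (T : 'I_t -> {set 'I_n}) (f : {set 'I_n})
  : {ffun 'I_t -> bool} :=
  [ffun i => test_response (T i) f].

Definition discards_far (n t : nat) (E : {set {set 'I_n}}) (p : nat)
  (T : 'I_t -> {set 'I_n}) : Prop :=
  forall estar e, estar \in E -> e \in E -> p <= #|e :\: estar| ->
    response_vec T e != response_vec T estar.

(* Main.v *)
Require Import Defs.
From mathcomp Require Import all_boot zify.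
Set Implicit Arguments. Unset Strict Implicit. Unset Printing Implicit Defensive.


Lemma bern1 m a : a <= m -> m ^ a * (m - a) <= (m - 1) ^ a * m.
Proof.
elim: a => [|a IH] Ha; first by rewrite !expn0; lia.
have IH' := IH (ltnW Ha).
rewrite !expnS.
set X := (m - 1) ^ a in IH' *. set Y := m ^ a in IH' *.
have : (m - 1) * (Y * (m - a)) <= (m - 1) * (X * m) by rewrite leq_mul2l IH' orbT.
nia.
Qed.

Lemma bern2 m b : 0 < m -> (m - 1) ^ b * (m + b) <= m ^ b * m.
Proof.
move=> hm; elim: b => [|b IH]; first by rewrite !expn0; lia.
rewrite !expnS.
set Z := (m - 1) ^ b in IH *. set W := m ^ b in IH *.
have : m * (Z * (m + b)) <= m * (W * m) by rewrite leq_mul2l IH orbT.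
have : (m - 1) * Z * (m + b.+1) <= m * (Z * (m + b)).
  have : (m - 1) * (m + b.+1) <= m * (m + b) by nia.
  move=> h.
  have -> : (m-1)*Z*(m+b.+1) = Z*((m-1)*(m+b.+1)) by nia.
  have -> : m*(Z*(m+b)) = Z*(m*(m+b)) by nia.
  exact: leq_mul (leqnn Z) h.
lia.
Qed.

Lemma ineq d p X Y W Z M : 0 < d -> p <= d -> Y <= 2 * X -> Z * (2 * d + p) <= W * (2 * d) -> Z <= W ->
  p * (Y * W * M) <= 8 * d * (X * W * M - X * Z * M).
Proof.
move=> hd hp hXY hZW hZ.
have [V eV] : exists V, W = V + Z by exists (W - Z); lia.
subst W.
have -> : X * (V + Z) * M - X * Z * M = X * V * M by rewrite !mulnDr !mulnDl; lia.
have hZV : Z * p <= 2 * d * V by nia.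
rewrite !mulnA; apply: leq_mul => //.
have hpY : p * Y <= d * (2 * X) by apply: leq_mul.
have h1 : p * Y * V <= d * (2 * X) * V by apply: leq_mul.
have h2 : p * Y * Z <= (2 * d * V) * (2 * X).
  have e : p * Y * Z = (Z * p) * Y by nia.
  rewrite e; exact: leq_mul.
rewrite mulnDr.
have e4 : d * (2 * X) * V = 2 * (d * X * V) by nia.
have e5 : 2 * d * V * (2 * X) = 4 * (d * X * V) by nia.
have e6 : 8 * d * X * V = 8 * (d * X * V) by nia.
rewrite e6; rewrite e4 in h1; rewrite e5 in h2; lia.
Qed.
Definition pool n m (h : {ffun 'I_n -> 'I_m}) : {set 'I_n} := [set x | val (h x) == 0].
Definition Fset n m (C : {set 'I_n}) : {set {ffun 'I_n -> 'I_m}} := [set h : {ffun 'I_n -> 'I_m} | [forall x in C, val (h x) != 0]].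

Lemma card_Fset n m (C : {set 'I_n}) : 0 < m -> #|Fset m C| = (m-1)^#|C| * m^#|~:C|.
Proof.
move=> hm.
pose F := fun x : 'I_n => (fun i : 'I_m => (x \notin C) || (val i != 0)).
have cf := card_family F.
have -> : #|Fset m C| = foldr muln 1 [seq #|F x| | x : 'I_n].
  rewrite -cf; apply: eq_card => h; rewrite inE; apply/forall_inP/familyP => H x; have := H x;
  rewrite /F; case: (boolP (x \in C)) => xC /=.
  - by move=> /(_ isT) a; exact a.
  - by move=> _; exact isT.
  - by move=> a _; exact a.
  - by [].
have fm : forall (f : 'I_n -> nat) (s : seq 'I_n), foldr muln 1 (map f s) = \prod_(x <- s) f x.
  by move=> f; elim => [|a s IH]; rewrite ?big_nil ?big_cons //= IH.
rewrite /image_mem fm big_enum /=.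
rewrite (bigID (fun x => x \in C)) /=.
have cF1 : forall x, x \in C -> #|F x| = m - 1.
  move=> x xC; rewrite /F xC /=.
  have -> : #|(fun i : 'I_m => val i != 0)| = #|predC1 (Ordinal hm)|.
    by apply: eq_card => i; rewrite !inE /in_mem /=.
  by rewrite cardC1 card_ord; lia.
have cF2 : forall x, x \notin C -> #|F x| = m.
  move=> x xC; rewrite /F (negbTE xC) /=.
  by rewrite -[RHS]card_ord; apply: eq_card.
rewrite (eq_bigr (fun _ => m - 1) cF1) (eq_bigr (fun _ => m) cF2) !prod_nat_const.
congr (_ * _); congr (_ ^ _); apply: eq_card => x; by rewrite !inE.
Qed.

Definition dist n (T : {set 'I_n}) (s : {set 'I_n} * {set 'I_n}) : bool :=
  test_response T s.2 != test_response T s.1.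

Lemma pair_count n d p (s : {set 'I_n} * {set 'I_n}) : 0 < d -> p <= d ->
  #|s.1| <= d -> p <= #|s.2 :\: s.1| ->
  p * (2 * d) ^ n <= 8 * d * #|[set h : {ffun 'I_n -> 'I_(2 * d)} | dist (pool h) s]|.
Proof.
move=> hd hpd ha hb.
set m := 2 * d. have hm : 0 < m by rewrite /m; lia.
set A := s.1. set B := s.2 :\: s.1.
set G := Fset m A :\: Fset m (A :|: B).
have sub1 : Fset m (A :|: B) \subset Fset m A.
  apply/subsetP => h; rewrite !inE => /forall_inP H; apply/forall_inP => x xA.
  by apply: H; rewrite inE xA.
have cG : #|G| = #|Fset m A| - #|Fset m (A :|: B)|.
  by rewrite /G cardsD (setIidPr sub1).
have sub2 : G \subset [set h : {ffun 'I_n -> 'I_m} | dist (pool h) s].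
  apply/subsetP => h; rewrite !inE => /andP [nF /forall_inP HA].
  have [y /andP [yAB hy]] : exists y, (y \in A :|: B) && (val (h y) == 0).
    case: (pickP (fun y => (y \in A :|: B) && (val (h y) == 0))) => [y hy | none]; first by exists y.
    move/negP: nF; case; apply/forall_inP => x xAB; have := none x; by rewrite xAB /= => ->.
  have yB : y \in B.
    move: yAB; rewrite inE => /orP [yA|//]. by move: (HA y yA); rewrite hy.
  rewrite /dist /test_response.
  have -> : pool h :&: s.1 == set0.
    apply/eqP/setP => x; rewrite !inE; apply/negP => /andP [hx xA].
    by move: (HA x xA); rewrite hx.
  have -> : pool h :&: s.2 != set0.
    apply/set0Pn; exists y; rewrite !inE hy /=. by move: yB; rewrite inE => /andP [].
  by [].
have leG := subset_leq_card sub2.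
apply: leq_trans (leq_mul (leqnn _) leG).
rewrite cG !card_Fset //.
have disj : A :&: B = set0.
  by apply/setP => x; rewrite !inE; case: (x \in A); rewrite ?andbF.
have cAB : #|A :|: B| = #|A| + #|B| by rewrite cardsU disj cards0 subn0.
have cC1 := cardsC A. have cC2 := cardsC (A :|: B).
rewrite card_ord in cC1 cC2.
set a := #|A| in ha cAB cC1 *. set b := #|B| in hb cAB *.
set c := #|~: (A :|: B)| in cC2 *.
have -> : #|~: A| = b + c by lia.
rewrite cAB.
have -> : n = a + b + c by lia.
rewrite !expnD.
rewrite [(m - 1) ^ a * (m ^ b * m ^ c)]mulnA; apply: (ineq (d := d)) => //.
- have h1 := bern1 (m := m) (a := a) ltac:(rewrite /m; lia).
  have h2 : m ^ a * d <= m ^ a * (m - a) by rewrite leq_mul2l; apply/orP; right; rewrite /m; lia.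
  have h3 := leq_trans h2 h1.
  rewrite /m in h3. 
  have : m ^ a * d <= 2 * (m - 1) ^ a * d by rewrite /m; nia.
  by rewrite leq_mul2r; case/orP => //; rewrite eqn0Ngt hd.
- have h1 := bern2 b hm.
  have : (m - 1) ^ b * (m + p) <= (m - 1) ^ b * (m + b) by rewrite leq_mul2l; apply/orP; right; lia.
  move=> h2; have := leq_trans h2 h1. by rewrite /m.
- have h1 := bern2 b hm.
  have : (m - 1) ^ b * m <= (m - 1) ^ b * (m + b) by rewrite leq_mul2l; apply/orP; right; lia.
  move=> h2; have := leq_trans h2 h1. by rewrite leq_pmul2r.
Qed.

Lemma card_sep (T : finType) (A : {set T}) (P : pred T) :
  #|[set x in A | P x]| = \sum_(x in A) (P x : nat).
Proof.
rewrite -sum1_card (eq_bigl (fun x => (x \in A) && P x)); last by move=> x; rewrite !inE.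
by rewrite big_mkcondr; apply: eq_bigr => x _; case: (P x).
Qed.

Lemma step n d p (S : {set ({set 'I_n} * {set 'I_n})}) : 0 < d -> p <= d ->
  (forall s, s \in S -> #|s.1| <= d /\ p <= #|s.2 :\: s.1|) ->
  exists T : {set 'I_n}, p * #|S| <= 8 * d * #|[set s in S | dist T s]|.
Proof.
move=> hd hpd hS. set m := 2 * d. have hm : 0 < m by rewrite /m; lia.
pose D := fun h : {ffun 'I_n -> 'I_m} => #|[set s in S | dist (pool h) s]|.
pose h0 : {ffun 'I_n -> 'I_m} := [ffun => Ordinal hm].
pose hmax := [arg max_(h > h0) D h].
exists (pool hmax).
have Hmax : forall h, D h <= D hmax.
  by rewrite /hmax; case: arg_maxnP => // h _ H h'; apply: H.
have sumeq : \sum_h D h = \sum_(s in S) #|[set h : {ffun 'I_n -> 'I_m} | dist (pool h) s]|.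
  rewrite /D; under eq_bigr => h _ do rewrite card_sep.
  rewrite exchange_big /=; apply: eq_bigr => s _.
  rewrite (eq_bigl (fun h => h \in [set: {ffun 'I_n -> 'I_m}])); last by move=> h; rewrite inE.
  rewrite -(card_sep [set: {ffun 'I_n -> 'I_m}] (fun h => dist (pool h) s)).
  by apply: eq_card => h; rewrite !inE.
have pc : forall s, s \in S -> p * m ^ n <= 8 * d * #|[set h : {ffun 'I_n -> 'I_m} | dist (pool h) s]|.
  by move=> s sS; have [h1 h2] := hS s sS; apply: pair_count.
have ch : \sum_(h : {ffun 'I_n -> 'I_m}) D hmax = m ^ n * D hmax.
  by rewrite sum_nat_const card_ffun !card_ord.
have key : p * #|S| * m ^ n <= 8 * d * D hmax * m ^ n.
  have e1 : p * #|S| * m ^ n = \sum_(s in S) p * m ^ n by rewrite sum_nat_const; lia.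
  rewrite e1.
  apply: (@leq_trans (\sum_(s in S) 8 * d * #|[set h : {ffun 'I_n -> 'I_m} | dist (pool h) s]|)); first exact: leq_sum.
  rewrite -big_distrr /= -sumeq.
  have H : \sum_(h : {ffun 'I_n -> 'I_m}) D h <= \sum_(h : {ffun 'I_n -> 'I_m}) D hmax by apply: leq_sum => h _; apply: Hmax.
  rewrite ch in H.
  have := leq_mul (leqnn (8 * d)) H. move=> H2; apply: leq_trans H2 _. 
  by rewrite [m ^ n * _]mulnC mulnA.
by rewrite leq_pmul2r ?expn_gt0 ?hm in key.
Qed.

Definition rem n (S : {set ({set 'I_n} * {set 'I_n})}) (L : seq {set 'I_n}) :=
  [set s in S | all (fun T => ~~ dist T s) L].

Lemma card_split (T : finType) (A : {set T}) (P : pred T) :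
  #|[set x in A | P x]| + #|[set x in A | ~~ P x]| = #|A|.
Proof.
rewrite !card_sep -big_split /= -sum1_card; apply: eq_bigr => x _; by case: (P x).
Qed.

Lemma iter n d p (S : {set ({set 'I_n} * {set 'I_n})}) : 0 < d -> p <= d ->
  (forall s, s \in S -> #|s.1| <= d /\ p <= #|s.2 :\: s.1|) ->
  forall t, exists L, size L = t /\ (8 * d) ^ t * #|rem S L| <= (8 * d - p) ^ t * #|S|.
Proof.
move=> hd hpd hS; elim => [|t [L [sL IH]]].
  exists [::]; split => //; rewrite !expn0 !mul1n; apply: subset_leq_card.
  by apply/subsetP => s; rewrite inE => /andP [].
have hS' : forall s, s \in rem S L -> #|s.1| <= d /\ p <= #|s.2 :\: s.1|.
  by move=> s; rewrite inE => /andP [/hS].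
have [T HT] := step hd hpd hS'.
exists (T :: L); split; first by rewrite /= sL.
have eR : rem S (T :: L) = [set s in rem S L | ~~ dist T s].
  apply/setP => s; rewrite !inE /=; by case: (s \in S); case: (dist T s); case: (all _ L).
rewrite eR.
have cs := card_split (rem S L) (dist T).
set k := 8 * d in HT *.
set U := #|[set s in rem S L | ~~ dist T s]| in cs *.
set Dd := #|[set s in rem S L | dist T s]| in cs HT *.
set S' := #|rem S L| in cs HT IH *.
have h1 : k * U <= (k - p) * S'.
  rewrite mulnBl -cs mulnDr.
  have : p * (Dd + U) <= k * Dd by rewrite cs.
  lia.
rewrite !expnS.
apply: (@leq_trans ((k - p) * (k ^ t * S'))).
  have e : k * k ^ t * U = k ^ t * (k * U) by rewrite mulnCA mulnA.
  rewrite e [X in _ <= X]mulnCA; exact: leq_mul (leqnn _) h1.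
by rewrite -mulnA leq_mul2l IH orbT.
Qed.

Definition Bad n (E : {set {set 'I_n}}) p : {set ({set 'I_n} * {set 'I_n})} :=
  [set s | [&& s.1 \in E, s.2 \in E & p <= #|s.2 :\: s.1|]].

Lemma card_Bad n (E : {set {set 'I_n}}) p : #|Bad E p| <= #|E| * #|E|.
Proof.
rewrite -cardsX; apply: subset_leq_card; apply/subsetP => s; rewrite !inE.
by case/and3P => -> ->.
Qed.

Lemma Bad_E2 n (E : {set {set 'I_n}}) p : 0 < p -> 0 < #|Bad E p| -> 1 < #|E|.
Proof.
move=> hp /card_gt0P [[a b]]; rewrite inE /= => /and3P [aE bE hab].
have ab : a != b.
  apply/eqP => eab; move: hab; rewrite eab setDv cards0; lia.
rewrite (cardD1 a) aE add1n ltnS; apply/card_gt0P; exists b; by rewrite !inE eq_sym ab.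
Qed.

Lemma comb_main n d p (E : {set {set 'I_n}}) : 0 < d -> p <= d ->
  (forall e, e \in E -> #|e| <= d) -> forall t,
  (8 * d - p) ^ t * #|Bad E p| < (8 * d) ^ t ->
  exists T : 'I_t -> {set 'I_n}, discards_far E p T.
Proof.
move=> hd hpd hEd t ht.
have hS : forall s, s \in Bad E p -> #|s.1| <= d /\ p <= #|s.2 :\: s.1|.
  by move=> s; rewrite inE => /and3P [h1 _ h3]; split => //; apply: hEd.
have [L [sL HL]] := iter hd hpd hS t.
have r0 : #|rem (Bad E p) L| = 0.
  have := leq_ltn_trans HL ht. rewrite -{2}[(8 * d) ^ t]muln1 ltn_mul2l.
  by case/andP => _; case: #|_|.
exists (fun i => nth set0 L i).
move=> estar e hes he hp.
have sB : (estar, e) \in Bad E p by rewrite inE /= hes he hp.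
have nR : (estar, e) \notin rem (Bad E p) L.
  by apply/negP => H; move/eqP: r0; rewrite cards_eq0 => /eqP r0; rewrite r0 inE in H.
move: nR; rewrite inE sB /= => hasd.
have : has (fun T => dist T (estar, e)) L.
  by rewrite -[has _ _]negbK -all_predC.
case/(has_nthP set0) => i hi hdi.
have hi' : i < t by rewrite -sL.
apply/negP => /eqP H.
have := congr1 (fun f : {ffun 'I_t -> bool} => f (Ordinal hi')) H; rewrite !ffunE /= => H2.
by move: hdi; rewrite /dist /= H2 eqxx.
Qed.

From Stdlib Require Import Reals ZArith Lra.

Lemma INR_muln a b : INR (muln a b) = (INR a * INR b)%R.
Proof. by rewrite mulnE mult_INR. Qed.

Lemma INR_expn a b : INR (expn a b) = (INR a ^ b)%R.
Proof. elim: b => [|b IH]; first by rewrite expn0. by rewrite expnS INR_muln IH. Qed.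

Lemma INR_subn a b : leq b a -> INR (subn a b) = (INR a - INR b)%R.
Proof. move=> h; rewrite subnE minus_INR //; exact/leP. Qed.

Lemma exp_pow' a t : (exp a ^ t = exp (a * INR t))%R.
Proof.
elim: t => [|t IH]; first by rewrite /= Rmult_0_r exp_0.
rewrite S_INR /= IH -exp_plus; f_equal; ring.
Qed.

Lemma real_key (x N : R) (t : nat) : (0 < x < 1)%R -> (0 < N)%R -> (ln N < x * INR t)%R ->
  ((1 - x) ^ t * N < 1)%R.
Proof.
move=> hx hN hl.
have h1 : ((1 - x) ^ t <= exp (- x) ^ t)%R.
  apply: pow_incr; split; first lra.
  have := exp_ineq1 (- x) ltac:(lra). lra.
rewrite exp_pow' in h1.
have h2 : (exp (- x * INR t) < exp (- ln N))%R by apply: exp_increasing; lra.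
rewrite exp_Ropp exp_ln // in h2.
have h3 : ((1 - x) ^ t < / N)%R by lra.
have := Rmult_lt_compat_r N _ _ hN h3. rewrite Rinv_l; lra.
Qed.

Lemma ln_nonneg_nat (a : nat) : leq 1 a -> (0 <= ln (INR a))%R.
Proof.
move=> ha. have : (1 <= INR a)%R by apply: (le_INR 1); apply/leP.
case/Rle_lt_or_eq_dec => h; last by rewrite -h ln_1; lra.
rewrite -ln_1; left; apply: ln_increasing => //; lra.
Qed.

Theorem theorem2 :
  exists C : R, (0 < C)%R /\
  forall (n d : nat) (E : {set {set 'I_n}}),
    0 < n -> 0 < d -> E != set0 ->
    (forall e, e \in E -> #|e| <= d) ->
    forall p : nat, 0 < p -> p <= d - 1 ->
    exists (t : nat) (T : 'I_t -> {set 'I_n}),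
      (INR t <= C * (INR d / INR p) * ln (INR #|E|))%R /\
      discards_far E p T.
Proof.
exists 18%R; split; first lra.
move=> n d E hn hd hE hEd p hp hpd.
have hd' : leq 1 d by [].
have hp' : leq 1 p by [].
have hpd' : leq p d by lia.
have hEd' : forall e, e \in E -> leq #|e| d by [].
have E1 : leq 1 #|E| by rewrite card_gt0.
have Rd : (0 < INR d)%R by apply: (lt_INR 0); apply/ltP.
have Rp : (0 < INR p)%R by apply: (lt_INR 0); apply/ltP.
have Rpd : (INR p <= INR d)%R by apply: le_INR; apply/leP.
have lE := ln_nonneg_nat E1.
have dp0 : (0 < INR d / INR p)%R by apply: Rdiv_lt_0_compat.
case N0 : (#|Bad E p| == 0).
  have [T HT] := comb_main hd' hpd' hEd' (t := 0) ltac:(by rewrite (eqP N0) !expn0).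
  exists 0, T; split => //.
  rewrite /=; apply: Rmult_le_pos => //; nra.
have N1 : leq 1 #|Bad E p| by rewrite lt0n N0.
have E2 := Bad_E2 hp' N1.
set N := #|Bad E p| in N0 N1 *.
have lN := ln_nonneg_nat N1.
have lE2 : (/ 2 < ln (INR #|E|))%R.
  apply: (Rlt_le_trans _ (ln 2)); first exact: ln_lt_2.
  have : (2 <= INR #|E|)%R by apply: (le_INR 2); apply/leP.
  case/Rle_lt_or_eq_dec => h; last by rewrite -h; lra.
  left; apply: ln_increasing => //; lra.
have RNE : (INR N <= INR #|E| ^ 2)%R.
  rewrite /= Rmult_1_r -INR_muln; apply: le_INR; apply/leP; exact: card_Bad.
have lNE : (ln (INR N) <= 2 * ln (INR #|E|))%R.
  have hN0 : (0 < INR N)%R by apply: (lt_INR 0); apply/ltP.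
  have RE : (0 < INR #|E|)%R by apply: (lt_INR 0); apply/ltP.
  have -> : (2 * ln (INR #|E|) = ln (INR #|E| ^ 2))%R by rewrite ln_pow //; simpl; ring.
  case/Rle_lt_or_eq_dec: RNE => h; last by rewrite h; lra.
  left; apply: ln_increasing => //.
set k := muln 8 d.
have Rk : INR k = (8 * INR d)%R by rewrite /k INR_muln; simpl; lra.
set x := (INR p / INR k)%R.
have hx : (0 < x < 1)%R.
  rewrite /x Rk; split; first by apply: Rdiv_lt_0_compat; lra.
  have e : (INR p / (8 * INR d) * (8 * INR d) = INR p)%R by field; lra.
  nra.
set r := (ln (INR N) / x)%R.
have r0 : (0 <= r)%R by rewrite /r /Rdiv; apply: Rmult_le_pos => //; left; apply: Rinv_0_lt_compat; lra.
have [ar1 ar2] := archimed r.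
have up0 : (0 <= up r)%Z by apply: le_IZR; lra.
set t := Z.to_nat (up r).
have Rt : INR t = IZR (up r) by rewrite /t INR_IZR_INZ Z2Nat.id.
have ht : ltn (muln (expn (subn k p) t) N) (expn k t).
  apply/ltP; apply: INR_lt.
  rewrite INR_muln !INR_expn INR_subn; last by rewrite /k; lia.
  have eq1 : (INR k - INR p = INR k * (1 - x))%R by rewrite /x; field; rewrite Rk; lra.
  rewrite eq1 Rpow_mult_distr Rmult_assoc.
  have hkt : (0 < INR k ^ t)%R by apply: pow_lt; rewrite Rk; lra.
  rewrite -{2}(Rmult_1_r (INR k ^ t)).
  apply: Rmult_lt_compat_l => //.
  apply: real_key => //; first by apply: (lt_INR 0); apply/ltP.
  rewrite Rt.
  have : (r * x = ln (INR N))%R by rewrite /r; field; lra.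
  nra.
have [T HT] := comb_main hd' hpd' hEd' ht.
exists t, T; split => //.
have tb : (INR t <= r + 1)%R by lra.
have rb : (r = 8 * (INR d / INR p) * ln (INR N))%R by rewrite /r /x Rk; field; lra.
have dp1 : (1 <= INR d / INR p)%R.
  have e : (INR d / INR p * INR p = INR d)%R by field; lra.
  nra.
nra.
Qed.
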